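(* For all integers $n\ge 4$ and $k\ge 0$, $$A_{n,k}\,b_n^{(k)}+B_{n,k}\,b_{n-1}^{(k)}+C_{n,k}\,b_{n-2}^{(k)}+D_{n,k}\,b_{n-3}^{(k)}+E_{n,k}\,b_{n-4}^{(k)}=0,$$ where $A_{n,k}=(n^2-(k+1)^2)(n^2-k^2)$, $B_{n,k}=-2n(2n-1)(n+k)(n-k-1)$, $C_{n,k}=-2n(n-1)\left(n^2-2n+3-3k(k+1)\right)$, $D_{n,k}=6n(n-1)(n-2)(2n-3)$, $E_{n,k}=9n(n-1)(n-2)(n-3)$.
   Context: Let $X(\theta)=1+2\cos\theta$ and, for $k\ge 0$, $\chi_k(\theta)=1+2\sum_{j=1}^{k}\cos(j\theta)$ (the character of the $(k+1)$-dimensional irreducible representation of the Lie algebra $A_1$). For $n\ge 0$ the integers $b_n^{(k)}$, $0\le k\le n$, are the unique coefficients with $X(\theta)^n=\sum_{k=0}^{n}b_n^{(k)}\chi_k(\theta)$ for all real $\theta$; set $b_n^{(k)}=0$ for $k>n$. *)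

(* Defs.v *)
From Stdlib Require Import Reals ZArith.
Open Scope R_scope.

Definition Xf (theta : R) : R := 1 + 2 * cos theta.

Fixpoint cos_sum (k : nat) (theta : R) : R :=
  match k with
  | O => 0
  | S k' => cos_sum k' theta + cos (INR (S k') * theta)
  end.

Definition chi (k : nat) (theta : R) : R := 1 + 2 * cos_sum k theta.

Definition is_b_table (b : nat -> nat -> Z) : Prop :=
  (forall (n : nat) (theta : R),
      (Xf theta) ^ n = sum_f_R0 (fun k => IZR (b n k) * chi k theta) n)
  /\ (forall n k : nat, (n < k)%nat -> b n k = 0%Z).

(* Main.v *)
Require Import Defs.
From Stdlib Require Import Reals ZArith Lia Lra.
Open Scope R_scope.

Fixpoint T (n : nat) (j : Z) : Z :=
  match n with
  | O => if Z.eq_dec j 0 then 1%Z else 0%Z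
  | S m => (T m (j-1) + T m j + T m (j+1))%Z
  end.

Lemma T_zero n : forall j, (Z.of_nat n < Z.abs j)%Z -> T n j = 0%Z.
Proof.
  induction n as [|n IH]; intros j H; simpl.
  - destruct (Z.eq_dec j 0); [subst; simpl in H; lia | reflexivity].
  - rewrite Nat2Z.inj_succ in H.
    rewrite !IH; lia.
Qed.

Lemma T_sym n : forall j, T n (-j) = T n j.
Proof.
  induction n as [|n IH]; intros j; simpl.
  - destruct (Z.eq_dec (-j) 0), (Z.eq_dec j 0); lia.
  - replace (-j-1)%Z with (-(j+1))%Z by ring.
    replace (-j+1)%Z with (-(j-1))%Z by ring.
    rewrite !IH; ring.
Qed.

Definition Dm (m : nat) (j : Z) : Z :=
  ((j-1)*T m (j-1) + j*T m j + (j+1)*T m (j+1) - Z.of_nat m * (T m (j-1) - T m (j+1)))%Z.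

Lemma T0_mul x : (x * T 0 x = 0)%Z.
Proof. simpl. destruct (Z.eq_dec x 0); subst; ring. Qed.

Lemma Dm_S m j : Dm (S m) j = (Dm m (j-1) + Dm m j + Dm m (j+1))%Z.
Proof.
  unfold Dm. simpl T. rewrite Nat2Z.inj_succ. unfold Z.succ.
  replace (j-1+1)%Z with j by ring. replace (j+1-1)%Z with j by ring.
  ring.
Qed.

Lemma Dm_zero m : forall j, Dm m j = 0%Z.
Proof.
  induction m as [|m IH]; intros j.
  - unfold Dm. simpl Z.of_nat.
    pose proof (T0_mul (j-1)). pose proof (T0_mul j). pose proof (T0_mul (j+1)).
    lia.
  - rewrite Dm_S, !IH. ring.
Qed.

Fixpoint CS (a : nat -> R) (th : R) (N : nat) : R :=
  match N with
  | O => a O * cos (INR O * th)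
  | S M => CS a th M + a (S M) * cos (INR (S M) * th)
  end.

Lemma CS_ext a b th N : (forall j, (j <= N)%nat -> a j = b j) -> CS a th N = CS b th N.
Proof.
  induction N as [|N IH]; intros H; simpl.
  - rewrite H; auto.
  - rewrite IH by (intros; apply H; lia). rewrite (H (S N)); auto.
Qed.

Lemma CS_plus a b th N : CS (fun j => a j + b j) th N = CS a th N + CS b th N.
Proof. induction N; simpl; [|rewrite IHN]; ring. Qed.

Lemma CS_scal c a th N : CS (fun j => c * a j) th N = c * CS a th N.
Proof. induction N; simpl; [|rewrite IHN]; ring. Qed.

Lemma CS_minus a b th N : CS (fun j => a j - b j) th N = CS a th N - CS b th N.
Proof. induction N; simpl; [|rewrite IHN]; ring. Qed.

Lemma CS_zero a th N : (forall j, (j <= N)%nat -> a j = 0) -> CS a th N = 0.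
Proof.
  intros H. rewrite (CS_ext a (fun j => 0 * 0)) by (intros; rewrite H; auto; ring).
  rewrite CS_scal. ring.
Qed.

Lemma CS_shift a th h N :
  CS a (th + h) N + CS a (th - h) N = CS (fun j => 2 * a j * cos (INR j * h)) th N.
Proof.
  induction N as [|N IH]; simpl.
  - rewrite !Rmult_0_l, cos_0. ring.
  - rewrite <- IH.
    rewrite !Rmult_plus_distr_l, Rmult_minus_distr_l, cos_plus, cos_minus. ring.
Qed.

Lemma cos_gt_m1 x : 0 <= x < PI -> cos x + 1 > 0.
Proof.
  intros [H1 H2]. pose proof (cos_decreasing_1 x PI H1 (Rlt_le _ _ H2) (Rlt_le _ _ (Rle_lt_trans _ _ _ H1 H2)) (Rle_refl _) H2).
  rewrite cos_PI in H. lra.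
Qed.

Lemma CS_S a th N : CS a th (S N) = CS a th N + a (S N) * cos (INR (S N) * th).
Proof. reflexivity. Qed.

Lemma CS_indep N : forall a, (forall th, CS a th N = 0) -> forall j, (j <= N)%nat -> a j = 0.
Proof.
  induction N as [|N IH]; intros a Ha j Hj.
  - assert (j = O) by lia; subst. specialize (Ha 0). simpl in Ha.
    rewrite Rmult_0_l, cos_0 in Ha. lra.
  - set (h := PI / INR (S N)).
    assert (HSN : INR (S N) <> 0) by (apply not_0_INR; lia).
    assert (Hh : INR (S N) * h = PI) by (unfold h; field; auto).
    set (b := fun j => a j * (2 * cos (INR j * h) + 2)).
    assert (Hlow : forall j, (j <= N)%nat -> b j = 0).
    { apply IH. intros th.
      assert (E : CS b th (S N)
                  = CS a (th + h) (S N) + CS a (th - h) (S N) + 2 * CS a th (S N)).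
      { rewrite CS_shift. rewrite <- CS_scal, <- CS_plus. apply CS_ext. intros; unfold b; ring. }
      rewrite !Ha in E. rewrite CS_S in E. unfold b at 2 in E. rewrite Hh, cos_PI in E.
      lra. }
    assert (Hlow2 : forall j, (j <= N)%nat -> a j = 0).
    { intros j0 Hj0. specialize (Hlow j0 Hj0). unfold b in Hlow.
      assert (cos (INR j0 * h) + 1 > 0).
      { apply cos_gt_m1. assert (0 <= INR j0) by apply pos_INR.
        assert (INR j0 < INR (S N)) by (apply lt_INR; lia).
        assert (0 < PI) by apply PI_RGT_0.
        assert (0 < h) by (unfold h; apply Rdiv_lt_0_compat; lra).
        split; [nra|]. rewrite <- Hh. nra. }
      nra. }
    destruct (Nat.eq_dec j (S N)) as [->|Hne]; [|apply Hlow2; lia].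
    specialize (Ha 0). rewrite CS_S, CS_zero in Ha by auto.
    rewrite Rmult_0_r, cos_0 in Ha. lra.
Qed.
Definition eps (j : nat) : R := match j with O => 1 | _ => 2 end.

Lemma cos_rec N th : cos (INR (S (S N)) * th) = 2 * cos th * cos (INR (S N) * th) - cos (INR N * th).
Proof.
  replace (INR (S (S N)) * th) with (INR (S N) * th + th) by (rewrite (S_INR (S N)); ring).
  replace (INR N * th) with (INR (S N) * th - th) by (rewrite (S_INR N); ring).
  rewrite cos_plus, cos_minus. ring.
Qed.

Lemma XS (t : Z -> R) (ht : forall j, t (-j)%Z = t j) th N :
  Xf th * CS (fun j => eps j * t (Z.of_nat j)) th N
  = CS (fun j => eps j * (t (Z.of_nat j - 1)%Z + t (Z.of_nat j) + t (Z.of_nat j + 1)%Z)) th (S N)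
    - 2 * ((t (Z.of_nat N + 1)%Z + t (Z.of_nat N + 2)%Z) * cos (INR (S N) * th)
           + t (Z.of_nat N + 1)%Z * cos (INR N * th)).
Proof.
  induction N as [|N IH].
  - unfold Xf. simpl CS. simpl Z.of_nat. simpl eps. simpl INR.
    rewrite !Rmult_0_l, cos_0, !Rmult_1_l.
    idtac.
    simpl (0+1)%Z. simpl (0+2)%Z. simpl (1+1)%Z. simpl (1-1)%Z. replace (t (-1)%Z) with (t 1%Z) by (rewrite <- (ht 1%Z); reflexivity). ring.
  - rewrite CS_S, Rmult_plus_distr_l, IH.
    rewrite (CS_S _ th (S N)).
    rewrite cos_rec.
    rewrite !Nat2Z.inj_succ. unfold Z.succ.
    replace (Z.of_nat N + 1 + 1)%Z with (Z.of_nat N + 2)%Z by ring.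
    replace (Z.of_nat N + 2 - 1)%Z with (Z.of_nat N + 1)%Z by ring.
    replace (Z.of_nat N + 1 + 2)%Z with (Z.of_nat N + 3)%Z by ring.
    replace (Z.of_nat N + 2 + 1)%Z with (Z.of_nat N + 3)%Z by ring.
    unfold eps, Xf. ring.
Qed.
Lemma Xpow n th : Xf th ^ n = CS (fun j => eps j * IZR (T n (Z.of_nat j))) th n.
Proof.
  induction n as [|n IH].
  - simpl. rewrite Rmult_0_l, cos_0. ring.
  - simpl pow. rewrite IH.
    rewrite (XS (fun j => IZR (T n j))) by (intros; rewrite T_sym; auto).
    rewrite !(T_zero n) by lia.
    replace (IZR 0 + IZR 0) with 0 by (simpl; ring).
    rewrite <- (Rminus_0_r (CS (fun j => eps j * IZR (T (S n) (Z.of_nat j))) th (S n))).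
    replace (2 * (0 * cos (INR (S n) * th) + IZR 0 * cos (INR n * th))) with 0 by (simpl; ring).
    f_equal. apply CS_ext. intros j _. simpl T. rewrite !plus_IZR. reflexivity.
Qed.

Lemma chi_CS k th : chi k th = CS eps th k.
Proof.
  induction k as [|k IH].
  - unfold chi. simpl. rewrite Rmult_0_l, cos_0. ring.
  - rewrite CS_S, <- IH. unfold chi. change (cos_sum (S k) th) with (cos_sum k th + cos (INR (S k) * th)). simpl eps. ring.
Qed.

Definition tl (c : nat -> R) (j n : nat) : R :=
  sum_f_R0 (fun k => if Nat.leb j k then c k else 0) n.

Lemma tl_above c j n : (n < j)%nat -> tl c j n = 0.
Proof.
  unfold tl. induction n as [|n IH]; intros H; simpl.
  - destruct (Nat.leb j 0) eqn:E; [apply Nat.leb_le in E; lia|auto].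
  - rewrite IH by lia. destruct (Nat.leb j (S n)) eqn:E; [apply Nat.leb_le in E; lia|ring].
Qed.

Lemma tl_S c j n : tl c j (S n) = tl c j n + (if Nat.leb j (S n) then c (S n) else 0).
Proof. reflexivity. Qed.

Lemma tl_step c j n : (j <= n)%nat -> tl c j n = c j + tl c (S j) n.
Proof.
  induction n as [|n IH]; intros H.
  - assert (j = O) by lia; subst. unfold tl; simpl. ring.
  - destruct (Nat.eq_dec j (S n)) as [->|Hne].
    + rewrite !tl_S. rewrite !tl_above by lia. rewrite Nat.leb_refl.
      replace (Nat.leb (S (S n)) (S n)) with false by (symmetry; apply Nat.leb_gt; lia). ring.
    + rewrite !tl_S.
      rewrite IH by lia.
      replace (Nat.leb j (S n)) with true by (symmetry; apply Nat.leb_le; lia).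
      replace (Nat.leb (S j) (S n)) with true by (symmetry; apply Nat.leb_le; lia). ring.
Qed.

Lemma chi_conv c th n :
  sum_f_R0 (fun k => c k * chi k th) n = CS (fun j => eps j * tl c j n) th n.
Proof.
  induction n as [|n IH].
  - simpl. unfold tl, chi. simpl. rewrite Rmult_0_l, cos_0. ring.
  - simpl sum_f_R0 at 1. rewrite IH, CS_S, chi_CS, CS_S.
    replace (tl c (S n) (S n)) with (c (S n)).
    2:{ rewrite tl_S, tl_above by lia.
        rewrite Nat.leb_refl. ring. }
    rewrite (CS_ext (fun j => eps j * tl c j (S n)) (fun j => eps j * tl c j n + c (S n) * eps j)).
    2:{ intros j Hj. rewrite tl_S.
        replace (Nat.leb j (S n)) with true by (symmetry; apply Nat.leb_le; lia). ring. }
    rewrite CS_plus, CS_scal. ring.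
Qed.

Lemma bT (b : nat -> nat -> Z) (hb : is_b_table b) n k :
  b n k = (T n (Z.of_nat k) - T n (Z.of_nat k + 1))%Z.
Proof.
  destruct hb as [h1 h2].
  assert (Hj : forall j, (j <= n)%nat -> IZR (T n (Z.of_nat j)) = tl (fun k => IZR (b n k)) j n).
  { intros j Hj.
    assert (Z0 : forall j, (j <= n)%nat ->
       (fun j => eps j * IZR (T n (Z.of_nat j)) - eps j * tl (fun k => IZR (b n k)) j n) j = 0).
    { apply CS_indep. intros th. rewrite CS_minus, <- Xpow, <- chi_conv, h1. ring. }
    specialize (Z0 j Hj). simpl in Z0.
    assert (eps j <> 0) by (destruct j; simpl; lra).
    apply (Rmult_eq_reg_l (eps j)); auto. lra. }
  destruct (Nat.le_gt_cases k n) as [Hk|Hk].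
  - apply eq_IZR. rewrite minus_IZR. rewrite Hj by auto.
    rewrite tl_step by auto.
    destruct (Nat.eq_dec k n) as [->|Hne].
    + rewrite tl_above by lia. rewrite T_zero by lia. simpl. ring.
    + replace (Z.of_nat k + 1)%Z with (Z.of_nat (S k)) by lia. rewrite Hj by lia. ring.
  - rewrite h2 by auto. rewrite !T_zero by lia. reflexivity.
Qed.

Lemma Pasc' m m1 j a c : m1 = S m -> a = (j-1)%Z -> c = (j+1)%Z ->
  T m1 j = (T m a + T m j + T m c)%Z.
Proof. intros -> -> ->. reflexivity. Qed.

Lemma Dm' m j a c z : a = (j-1)%Z -> c = (j+1)%Z -> z = Z.of_nat m ->
  ((j-1)*T m a + j*T m j + (j+1)*T m c - z*(T m a - T m c) = 0)%Z.
Proof. intros -> -> ->. apply (Dm_zero m j). Qed.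

Theorem theorem4 (b : nat -> nat -> Z) (hb : is_b_table b) (n k : nat) (hn : (4 <= n)%nat) :
  let N := Z.of_nat n in
  let K := Z.of_nat k in
  ((N^2 - (K+1)^2) * (N^2 - K^2) * b n k
   + (-2 * N * (2*N - 1) * (N + K) * (N - K - 1)) * b (n-1)%nat k
   + (-2 * N * (N - 1) * (N^2 - 2*N + 3 - 3*K*(K+1))) * b (n-2)%nat k
   + (6 * N * (N - 1) * (N - 2) * (2*N - 3)) * b (n-3)%nat k
   + (9 * N * (N - 1) * (N - 2) * (N - 3)) * b (n-4)%nat k = 0)%Z.
Proof.
  intros N K. subst N K.
  destruct (Nat.le_exists_sub 4 n hn) as [p [-> _]].
  replace (p+4-1)%nat with (3+p)%nat by lia.
  replace (p+4-2)%nat with (2+p)%nat by lia.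
  replace (p+4-3)%nat with (1+p)%nat by lia.
  replace (p+4-4)%nat with p by lia.
  replace (p+4)%nat with (4+p)%nat by lia.
  rewrite !(bT b hb).
  replace (Z.of_nat (4+p)) with (Z.of_nat p + 4)%Z by lia.
  remember (Z.of_nat p) as P eqn:HP. remember (Z.of_nat k) as K eqn:HK.
  assert (H0 : ((T (1+p)%nat K - T p (K-1) - T p K - T p (K+1)) = 0)%Z) by (rewrite (Pasc' p (1+p)%nat K (K-1) (K+1)); [ring|lia|lia|lia]).
  assert (H1 : ((T (1+p)%nat (K+1) - T p K - T p (K+1) - T p (K+2)) = 0)%Z) by (rewrite (Pasc' p (1+p)%nat (K+1) K (K+2)); [ring|lia|lia|lia]).
  assert (H2 : ((T (2+p)%nat K - T (1+p)%nat (K-1) - T (1+p)%nat K - T (1+p)%nat (K+1)) = 0)%Z) by (rewrite (Pasc' (1+p)%nat (2+p)%nat K (K-1) (K+1)); [ring|lia|lia|lia]).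
  assert (H3 : ((T (2+p)%nat (K+1) - T (1+p)%nat K - T (1+p)%nat (K+1) - T (1+p)%nat (K+2)) = 0)%Z) by (rewrite (Pasc' (1+p)%nat (2+p)%nat (K+1) K (K+2)); [ring|lia|lia|lia]).
  assert (H4 : ((T (3+p)%nat K - T (2+p)%nat (K-1) - T (2+p)%nat K - T (2+p)%nat (K+1)) = 0)%Z) by (rewrite (Pasc' (2+p)%nat (3+p)%nat K (K-1) (K+1)); [ring|lia|lia|lia]).
  assert (H5 : ((T (3+p)%nat (K+1) - T (2+p)%nat K - T (2+p)%nat (K+1) - T (2+p)%nat (K+2)) = 0)%Z) by (rewrite (Pasc' (2+p)%nat (3+p)%nat (K+1) K (K+2)); [ring|lia|lia|lia]).
  assert (H6 : ((T (4+p)%nat K - T (3+p)%nat (K-1) - T (3+p)%nat K - T (3+p)%nat (K+1)) = 0)%Z) by (rewrite (Pasc' (3+p)%nat (4+p)%nat K (K-1) (K+1)); [ring|lia|lia|lia]).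
  assert (H7 : ((T (4+p)%nat (K+1) - T (3+p)%nat K - T (3+p)%nat (K+1) - T (3+p)%nat (K+2)) = 0)%Z) by (rewrite (Pasc' (3+p)%nat (4+p)%nat (K+1) K (K+2)); [ring|lia|lia|lia]).
  assert (H8 : (((K-1)*T p (K-1) + K*T p K + (K+1)*T p (K+1) - (P+0)*(T p (K-1) - T p (K+1))) = 0)%Z) by (apply (Dm' p K (K-1) (K+1)); lia).
  assert (H9 : ((((K+1)-1)*T p K + (K+1)*T p (K+1) + ((K+1)+1)*T p (K+2) - (P+0)*(T p K - T p (K+2))) = 0)%Z) by (apply (Dm' p (K+1) K (K+2)); lia).
  assert (H10 : (((K-1)*T (1+p)%nat (K-1) + K*T (1+p)%nat K + (K+1)*T (1+p)%nat (K+1) - (P+1)*(T (1+p)%nat (K-1) - T (1+p)%nat (K+1))) = 0)%Z) by (apply (Dm' (1+p)%nat K (K-1) (K+1)); lia).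
  assert (H11 : ((((K+1)-1)*T (1+p)%nat K + (K+1)*T (1+p)%nat (K+1) + ((K+1)+1)*T (1+p)%nat (K+2) - (P+1)*(T (1+p)%nat K - T (1+p)%nat (K+2))) = 0)%Z) by (apply (Dm' (1+p)%nat (K+1) K (K+2)); lia).
  assert (H12 : (((K-1)*T (2+p)%nat (K-1) + K*T (2+p)%nat K + (K+1)*T (2+p)%nat (K+1) - (P+2)*(T (2+p)%nat (K-1) - T (2+p)%nat (K+1))) = 0)%Z) by (apply (Dm' (2+p)%nat K (K-1) (K+1)); lia).
  assert (H13 : ((((K+1)-1)*T (2+p)%nat K + (K+1)*T (2+p)%nat (K+1) + ((K+1)+1)*T (2+p)%nat (K+2) - (P+2)*(T (2+p)%nat K - T (2+p)%nat (K+2))) = 0)%Z) by (apply (Dm' (2+p)%nat (K+1) K (K+2)); lia).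
  assert (H14 : (((K-1)*T (3+p)%nat (K-1) + K*T (3+p)%nat K + (K+1)*T (3+p)%nat (K+1) - (P+3)*(T (3+p)%nat (K-1) - T (3+p)%nat (K+1))) = 0)%Z) by (apply (Dm' (3+p)%nat K (K-1) (K+1)); lia).
  assert (H15 : ((((K+1)-1)*T (3+p)%nat K + (K+1)*T (3+p)%nat (K+1) + ((K+1)+1)*T (3+p)%nat (K+2) - (P+3)*(T (3+p)%nat K - T (3+p)%nat (K+2))) = 0)%Z) by (apply (Dm' (3+p)%nat (K+1) K (K+2)); lia).
  transitivity (((216)*P^0*K^0 + (-216)*P^0*K^1 + (450)*P^1*K^0 + (-234)*P^1*K^1 + (315)*P^2*K^0 + (-81)*P^2*K^1 + (90)*P^3*K^0 + (-9)*P^3*K^1 + (9)*P^4*K^0)*(T (1+p)%nat K - T p (K-1) - T p K - T p (K+1)) + ((-432)*P^0*K^0 + (-216)*P^0*K^1 + (-684)*P^1*K^0 + (-234)*P^1*K^1 + (-396)*P^2*K^0 + (-81)*P^2*K^1 + (-99)*P^3*K^0 + (-9)*P^3*K^1 + (-9)*P^4*K^0)*(T (1+p)%nat (K+1) - T p K - T p (K+1) - T p (K+2)) + ((360)*P^0*K^0 + (-252)*P^0*K^1 + (36)*P^0*K^2 + (462)*P^1*K^0 + (-219)*P^1*K^1 + (21)*P^1*K^2 + (213)*P^2*K^0 + (-63)*P^2*K^1 + (3)*P^2*K^2 + (42)*P^3*K^0 + (-6)*P^3*K^1 + (3)*P^4*K^0)*(T (2+p)%nat K - T (1+p)%nat (K-1)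 - T (1+p)%nat K - T (1+p)%nat (K+1)) + ((-648)*P^0*K^0 + (-324)*P^0*K^1 + (-36)*P^0*K^2 + (-702)*P^1*K^0 + (-261)*P^1*K^1 + (-21)*P^1*K^2 + (-279)*P^2*K^0 + (-69)*P^2*K^1 + (-3)*P^2*K^2 + (-48)*P^3*K^0 + (-6)*P^3*K^1 + (-3)*P^4*K^0)*(T (2+p)%nat (K+1) - T (1+p)%nat K - T (1+p)%nat (K+1) - T (1+p)%nat (K+2)) + ((-816)*P^0*K^0 + (212)*P^0*K^1 + (56)*P^0*K^2 + (-12)*P^0*K^3 + (-920)*P^1*K^0 + (157)*P^1*K^1 + (34)*P^1*K^2 + (-3)*P^1*K^3 + (-387)*P^2*K^0 + (38)*P^2*K^1 + (5)*P^2*K^2 + (-72)*P^3*K^0 + (3)*P^3*K^1 + (-5)*P^4*K^0)*(T (3+p)%nat K - T (2+p)%nat (K-1) - T (2+p)%nat K - T (2+p)%nat (K+1)) + ((960)*P^0*K^0 + (64)*P^0*K^1 + (-92)*P^0*K^2 + (-12)*P^0*K^3 + (1040)*P^1*K^0 + (80)*P^1*K^1 + (-43)*P^1*K^2 + (-3)*P^1*K^3 + (420)*P^2*K^0 + (28)*P^2*K^1 + (-5)*P^2*K^2 + (75)*P^3*K^0 + (3)*P^3*K^1 + (5)*P^4*K^0)*(T (3+p)%nat (K+1) - T (2+p)%nat K - T (2+p)%nat (K+1) - T (2+p)%nat (K+2)) + ((240)*P^0*K^0 + (-32)*P^0*K^1 + (-31)*P^0*K^2 + (2)*P^0*K^3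 + (1)*P^0*K^4 + (248)*P^1*K^0 + (-16)*P^1*K^1 + (-16)*P^1*K^2 + (95)*P^2*K^0 + (-2)*P^2*K^1 + (-2)*P^2*K^2 + (16)*P^3*K^0 + (1)*P^4*K^0)*(T (4+p)%nat K - T (3+p)%nat (K-1) - T (3+p)%nat K - T (3+p)%nat (K+1)) + ((-240)*P^0*K^0 + (32)*P^0*K^1 + (31)*P^0*K^2 + (-2)*P^0*K^3 + (-1)*P^0*K^4 + (-248)*P^1*K^0 + (16)*P^1*K^1 + (16)*P^1*K^2 + (-95)*P^2*K^0 + (2)*P^2*K^1 + (2)*P^2*K^2 + (-16)*P^3*K^0 + (-1)*P^4*K^0)*(T (4+p)%nat (K+1) - T (3+p)%nat K - T (3+p)%nat (K+1) - T (3+p)%nat (K+2)) + ((-216)*P^0*K^0 + (-234)*P^1*K^0 + (-81)*P^2*K^0 + (-9)*P^3*K^0)*((K-1)*T p (K-1) + K*T p K + (K+1)*T p (K+1) - (P+0)*(T p (K-1) - T p (K+1))) + ((-216)*P^0*K^0 + (-234)*P^1*K^0 + (-81)*P^2*K^0 + (-9)*P^3*K^0)*(((K+1)-1)*T p K + (K+1)*T p (K+1) + ((K+1)+1)*T p (K+2) - (P+0)*(T p K - T p (K+2))) + ((-180)*P^0*K^0 + (36)*P^0*K^1 + (-141)*P^1*K^0 + (21)*P^1*K^1 + (-36)*P^2*K^0 + (3)*P^2*K^1 + (-3)*P^3*K^0)*((K-1)*T (1+p)%nat (K-1) + K*T (1+p)%nat K + (K+1)*T (1+p)%nat (K+1)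 - (P+1)*(T (1+p)%nat (K-1) - T (1+p)%nat (K+1))) + ((-216)*P^0*K^0 + (-36)*P^0*K^1 + (-162)*P^1*K^0 + (-21)*P^1*K^1 + (-39)*P^2*K^0 + (-3)*P^2*K^1 + (-3)*P^3*K^0)*(((K+1)-1)*T (1+p)%nat K + (K+1)*T (1+p)%nat (K+1) + ((K+1)+1)*T (1+p)%nat (K+2) - (P+1)*(T (1+p)%nat K - T (1+p)%nat (K+2))) + ((272)*P^0*K^0 + (20)*P^0*K^1 + (-12)*P^0*K^2 + (216)*P^1*K^0 + (13)*P^1*K^1 + (-3)*P^1*K^2 + (57)*P^2*K^0 + (2)*P^2*K^1 + (5)*P^3*K^0)*((K-1)*T (2+p)%nat (K-1) + K*T (2+p)%nat K + (K+1)*T (2+p)%nat (K+1) - (P+2)*(T (2+p)%nat (K-1) - T (2+p)%nat (K+1))) + ((240)*P^0*K^0 + (-44)*P^0*K^1 + (-12)*P^0*K^2 + (200)*P^1*K^0 + (-19)*P^1*K^1 + (-3)*P^1*K^2 + (55)*P^2*K^0 + (-2)*P^2*K^1 + (5)*P^3*K^0)*(((K+1)-1)*T (2+p)%nat K + (K+1)*T (2+p)%nat (K+1) + ((K+1)+1)*T (2+p)%nat (K+2) - (P+2)*(T (2+p)%nat K - T (2+p)%nat (K+2))) + ((-60)*P^0*K^0 + (-7)*P^0*K^1 + (6)*P^0*K^2 + (1)*P^0*K^3 + (-47)*P^1*K^0 + (-6)*P^1*K^1 + (1)*P^1*K^2 + (-12)*P^2*K^0 + (-1)*P^2*K^1 +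 (-1)*P^3*K^0)*((K-1)*T (3+p)%nat (K-1) + K*T (3+p)%nat K + (K+1)*T (3+p)%nat (K+1) - (P+3)*(T (3+p)%nat (K-1) - T (3+p)%nat (K+1))) + ((-48)*P^0*K^0 + (16)*P^0*K^1 + (3)*P^0*K^2 + (-1)*P^0*K^3 + (-40)*P^1*K^0 + (8)*P^1*K^1 + (1)*P^1*K^2 + (-11)*P^2*K^0 + (1)*P^2*K^1 + (-1)*P^3*K^0)*(((K+1)-1)*T (3+p)%nat K + (K+1)*T (3+p)%nat (K+1) + ((K+1)+1)*T (3+p)%nat (K+2) - (P+3)*(T (3+p)%nat K - T (3+p)%nat (K+2))))%Z.
  - ring.
  - rewrite H0, H1, H2, H3, H4, H5, H6, H7, H8, H9, H10, H11, H12, H13, H14, H15. ring.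
Qed.
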